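(* Let $(A_n)_{n\ge0}$ be an Appell sequence, i.e. $A_0=1$ and $A_n'=nA_{n-1}$ for $n\ge1$, so that $A_n(x)=\sum_{j=0}^n\binom nj z_jx^{n-j}$ with $z_0=1$ and $z_j=A_j(0)$. For any partition $\lambda$ of size $n$, $$A_\lambda(x)=x^n+\binom n1z_1x^{n-1}+\Big(c(\lambda)(z_2-z_1^2)+\binom n2 z_1^2\Big)x^{n-2}+O(x^{n-3}),$$ i.e. the coefficients of $x^n$, $x^{n-1}$, $x^{n-2}$ in $A_\lambda$ are $1$, $nz_1$ and $c(\lambda)(z_2-z_1^2)+\binom n2z_1^2$ respectively.
   Context: For a partition $\lambda=(\lambda_1\ge\dots\ge\lambda_{\ell(\lambda)}>0)$ with degree vector $n_i=\lambda_i+\ell(\lambda)-i$, the Wronskian Appell polynomial is $A_\lambda=\mathrm{Wr}[A_{n_1},\dots,A_{n_{\ell(\lambda)}}]/\prod_{i<j}(n_j-n_i)$ ($A_\emptyset=1$). The content sum is $c(\lambda)=\sum_{(i,j)\in\lambda}(j-i)$, summed over the boxes $(i,j)$, $1\le i\le\ell(\lambda)$, $1\le j\le\lambda_i$, of the Young diagram. *)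

(* Defs.v *)
From HB Require Import structures.
From mathcomp Require Import all_boot all_order all_algebra.
Set Implicit Arguments. Unset Strict Implicit. Unset Printing Implicit Defensive.
Import Order.TTheory GRing.Theory Num.Theory.
Local Open Scope ring_scope.

Definition is_partition (la : seq nat) : bool :=
  sorted geq la && all (fun x => 0 < x)%N la.

(* degree vector n_i = la_i + l(la) - i  (1-based i), here 0-based index i *)
Definition degvec (la : seq nat) : seq nat :=
  [seq (nth 0 la i + size la - i.+1)%N | i <- iota 0 (size la)].

Definition wronskian (R : comNzRingType) (fs : seq {poly R}) : {poly R} :=
  \det (\matrix_(i < size fs, j < size fs) (fs`_j)^`(i)).

Definition appell_wr (R : fieldType) (A : nat -> {poly R}) (la : seq nat)
    : {poly R} :=
  let ns := degvec la in
  (\prod_(i < size ns) \prod_(j < size ns | (i < j)%N)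
      ((nth 0%N ns j)%:R - (nth 0%N ns i)%:R : R))^-1 *: wronskian (map A ns).

Definition content (la : seq nat) : int :=
  \sum_(i < size la) \sum_(j < nth 0 la i) ((j%:Z) - (i%:Z)).

Definition appell (R : fieldType) (A : nat -> {poly R}) : Prop :=
  A 0%N = 1 /\ forall n : nat, (A n.+1)^`() = n.+1%:R *: A n.

(* Main.v *)
Require Import Defs.
From HB Require Import structures.
From mathcomp Require Import all_boot all_order all_algebra all_fingroup.
From mathcomp Require Import zify ring.
Set Implicit Arguments. Unset Strict Implicit. Unset Printing Implicit Defensive.
Import Order.TTheory GRing.Theory Num.Theory.
Local Open Scope ring_scope.

Section Rev.
Variable R : comNzRingType.

Definition rv (d : nat) (p : {poly R}) := \poly_(i < d.+1) p`_(d - i).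

Lemma rvD d p q : rv d (p + q) = rv d p + rv d q.
Proof. by apply/polyP => k; rewrite /rv coefD !coef_poly coefD; case: ifP; rewrite ?addr0. Qed.

Lemma rvZ d c p : rv d (c *: p) = c *: rv d p.
Proof. by apply/polyP => k; rewrite /rv coefZ !coef_poly coefZ; case: ifP; rewrite ?mulr0. Qed.

Lemma rv0 d : rv d 0 = 0.
Proof. by apply/polyP => k; rewrite /rv coef_poly !coef0 if_same. Qed.

Lemma rv_sum d (I : finType) (F : I -> {poly R}) :
  rv d (\sum_i F i) = \sum_i rv d (F i).
Proof. exact: (big_morph _ (@rvD d) (rv0 d)). Qed.

Lemma rvXn d e : (e <= d)%N -> rv d 'X^e = 'X^(d - e).
Proof.
move=> le; apply/polyP => k; rewrite /rv coef_poly !coefXn.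
case: ltnP => hk.
  by congr (_%:R); case: eqP => h; case: eqP => h2 //; lia.
by case: eqP => //; lia.
Qed.

Lemma poly_wide d (p : {poly R}) : (size p <= d.+1)%N -> p = \sum_(i < d.+1) p`_i *: 'X^i.
Proof.
move=> hs; rewrite -poly_def; apply/polyP => k; rewrite /rv coef_poly.
by case: ltnP => // hk; rewrite nth_default //; apply: leq_trans hk.
Qed.

Lemma rvE d (p : {poly R}) : (size p <= d.+1)%N -> rv d p = \sum_(i < d.+1) p`_i *: 'X^(d - i).
Proof.
move=> hs; rewrite {1}(poly_wide hs) rv_sum; apply: eq_bigr => i _.
by rewrite rvZ rvXn // -ltnS.
Qed.

Lemma size_mul_le (p q : {poly R}) d1 d2 : (size p <= d1.+1)%N -> (size q <= d2.+1)%N ->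
  (size (p * q)%R <= (d1 + d2).+1)%N.
Proof.
move=> hp hq; apply: leq_trans (size_mul_leq _ _) _.
move: hp hq; case: (size p) => [|a]; case: (size q) => [|b] //=; lia.
Qed.

Lemma rvM (p q : {poly R}) d1 d2 : (size p <= d1.+1)%N -> (size q <= d2.+1)%N ->
  rv (d1 + d2) (p * q) = rv d1 p * rv d2 q.
Proof.
move=> hp hq.
rewrite (rvE hp) (rvE hq) {1}(poly_wide hp) {1}(poly_wide hq).
rewrite mulr_suml rv_sum mulr_suml; apply: eq_bigr => i _.
rewrite mulr_sumr rv_sum mulr_sumr; apply: eq_bigr => j _.
rewrite -scalerAl -scalerAr scalerA -exprD rvZ rvXn.
  rewrite -scalerAl -scalerAr scalerA -exprD; congr (_ *: 'X^_).
  have := ltn_ord i; have := ltn_ord j; lia.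
have := ltn_ord i; have := ltn_ord j; lia.
Qed.

End Rev.
Lemma ffact_mul m i : (m ^_ i * m = m ^_ i.+1 + i * m ^_ i)%N.
Proof.
rewrite ffactnSr; case: (leqP i m) => h.
  rewrite mulnBr; have : (m ^_ i * i <= m ^_ i * m)%N by apply: leq_mul.
  lia.
by rewrite ffact_small // !muln0 mul0n.
Qed.

Section Mat.
Variable R : fieldType.

Lemma bin2n a : ('C(a, 2) * 2 = a * a.-1)%N.
Proof.
elim: a => [|a IH] //; rewrite (binS _ 1) bin1 mulnDl IH /=.
case: a {IH} => [|a] //=; lia.
Qed.

Lemma bin2R a : 2%:R * 'C(a, 2)%:R = a%:R * (a%:R - 1) :> R.
Proof.
case: a => [|b]; first by rewrite mul0r mulr0.
by rewrite -natrM mulnC bin2n /= natrM -addn1 natrD addrK.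
Qed.

Variable l : nat.
Variable m : 'I_l -> nat.
Definition F : 'M[R]_l := \matrix_(i < l, j < l) (m j ^_ i)%:R.
Local Notation C := (cofactor F).

Lemma rowX (X : 'I_l -> 'I_l -> R) i0 :
  \sum_j X i0 j * F i0 j * C i0 j =
  \sum_(s : 'S_l) (-1) ^+ s * (\prod_i F i (s i)) * X i0 (s i0).
Proof.
pose G : 'M[R]_l := \matrix_(i, j) if i == i0 then X i j * F i j else F i j.
have hC j : cofactor G i0 j = C i0 j.
  rewrite /cofactor; congr (_ * \det _); apply/matrixP => a b.
  by rewrite !mxE eq_sym (negbTE (neq_lift _ _)).
transitivity (\det G).
  by rewrite (expand_det_row _ i0); apply: eq_bigr => j _; rewrite hC /G !mxE eqxx.
apply: eq_bigr => s _; rewrite -mulrA; congr (_ * _).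
rewrite (bigD1 i0) //= [in RHS](bigD1 i0) //= mxE eqxx.
have -> : \prod_(i < l | i != i0) G i (s i) = \prod_(i < l | i != i0) F i (s i).
  by apply: eq_bigr => i /negbTE hi; rewrite /G mxE hi.
ring.
Qed.

Lemma sumX (X : 'I_l -> 'I_l -> R) :
  \sum_(s : 'S_l) (-1) ^+ s * (\prod_i F i (s i)) * (\sum_i X i (s i)) =
  \sum_i \sum_j X i j * F i j * C i j.
Proof.
under [RHS]eq_bigr do rewrite rowX.
rewrite exchange_big /=; apply: eq_bigr => s _.
by rewrite mulr_sumr.
Qed.

Lemma offd i i' : i' != i -> \sum_j F i' j * C i j = 0.
Proof.
move=> hne; transitivity ((F *m \adj F) i' i).
  by rewrite [RHS]mxE; apply: eq_bigr => j _; rewrite [\adj F _ _]mxE.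
by rewrite mul_mx_adj !mxE (negbTE hne) mulr0n.
Qed.

Definition Y (i : 'I_l) := \sum_j (m j ^_ i.+1)%:R * C i j.

Lemma Y0 (i : 'I_l) : (i.+1 < l)%N -> Y i = 0.
Proof.
move=> hi; have hne : Ordinal hi != i.
  by apply/negP => /eqP /(congr1 val) /= /eqP; lia.
rewrite /Y -[RHS](offd hne); apply: eq_bigr => j _; by rewrite mxE.
Qed.

Lemma mF i j : (m j)%:R * F i j = (m j ^_ i.+1)%:R + i%:R * F i j.
Proof. by rewrite !mxE -!natrM mulnC ffact_mul natrD. Qed.

Lemma sum_mFC i : \sum_j (m j)%:R * F i j * C i j = Y i + i%:R * \det F.
Proof.
rewrite (expand_det_row _ i) mulr_sumr -big_split /=; apply: eq_bigr => j _.
by rewrite mF mulrDl -[i%:R * _ * _]mulrA.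
Qed.

Lemma sumY : \sum_i Y i = (\sum_j (m j)%:R - \sum_(i < l) (i : nat)%:R) * \det F.
Proof.
have : \sum_i \sum_j (m j)%:R * F i j * C i j = (\sum_j (m j)%:R) * \det F.
  rewrite exchange_big /= mulr_suml; apply: eq_bigr => j _.
  by rewrite (expand_det_col _ j) mulr_sumr; apply: eq_bigr => i _; rewrite !mulrA.
under eq_bigr do rewrite sum_mFC.
rewrite big_split /= -mulr_suml => E.
by rewrite mulrBl -E addrK.
Qed.

Lemma wY (i : 'I_l) : (i.*2.+1)%:R * Y i = (l.*2 - 1)%:R * Y i.
Proof.
case: (ltnP i.+1 l) => h; first by rewrite Y0 // !mulr0.
have := ltn_ord i => h2; congr (_%:R * _); lia.
Qed.

Lemma content_sum :
  2%:R * (\sum_(s : 'S_l) (-1) ^+ s * (\prod_i F i (s i)) *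
             (\sum_i 'C(m (s i) - i, 2)%:R)) =
  \det F * (\sum_j (m j)%:R ^+ 2 - \sum_(i < l) (i : nat)%:R ^+ 2
            - (l.*2 - 1)%:R * (\sum_j (m j)%:R - \sum_(i < l) (i : nat)%:R)).
Proof.
rewrite (sumX (fun i j => 'C(m j - i, 2)%:R)) mulr_sumr.
have Xb (i j : 'I_l) : 2%:R * ('C(m j - i, 2)%:R * F i j * C i j) =
    (m j)%:R ^+ 2 * F i j * C i j - i.*2.+1%:R * ((m j)%:R * F i j * C i j)
    + (i * i.+1)%:R * (F i j * C i j).
  have h : 2%:R * 'C(m j - i, 2)%:R * F i j =
      ((m j)%:R ^+ 2 - i.*2.+1%:R * (m j)%:R + (i * i.+1)%:R) * F i j.
    rewrite mxE; case: (leqP i (m j)) => h; last by rewrite ffact_small // !mulr0.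
    have e1 : (i.*2.+1)%:R = 2%:R * i%:R + 1 :> R.
      by rewrite -addnn -addn1 !natrD; ring.
    have e2 : (i * i.+1)%:R = i%:R * (i%:R + 1) :> R by rewrite natrM -addn1 natrD.
    rewrite bin2R natrB // e1 e2; ring.
  move: h; set c := C i j; set f := F i j => h.
  have -> : 2%:R * ('C(m j - i, 2)%:R * f * c) = (2%:R * 'C(m j - i, 2)%:R * f) * c by ring.
  rewrite h; ring.
under eq_bigr do rewrite mulr_sumr; under eq_bigr do under eq_bigr do rewrite Xb.
under eq_bigr do rewrite big_split /= big_split /=.
rewrite !big_split /=.
have e1 : \sum_(i < l) \sum_(j < l) (m j)%:R ^+ 2 * F i j * C i j = (\sum_j (m j)%:R ^+ 2) * \det F.
  rewrite exchange_big /= mulr_suml; apply: eq_bigr => j _.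
  by rewrite (expand_det_col _ j) mulr_sumr; apply: eq_bigr => i _; rewrite !mulrA.
have e2 : \sum_(i < l) \sum_(j < l) - (i.*2.+1%:R * ((m j)%:R * F i j * C i j)) =
    - ((l.*2 - 1)%:R * \sum_i Y i +
       \sum_(i < l) (i.*2.+1 * i)%:R * \det F).
  rewrite mulr_sumr -big_split /= -sumrN; apply: eq_bigr => i _.
  by rewrite sumrN -mulr_sumr sum_mFC mulrDr wY natrM mulrA.
have e3 : \sum_(i < l) \sum_(j < l) (i * i.+1)%:R * (F i j * C i j) =
    \sum_(i < l) (i * i.+1)%:R * \det F.
  by apply: eq_bigr => i _; rewrite -mulr_sumr -expand_det_row.
rewrite e1 e2 e3 sumY -!mulr_suml.
have -> : \sum_(i < l) (i.*2.+1 * i)%:R = 2%:R * \sum_(i < l) (i : nat)%:R ^+ 2 + \sum_(i < l) (i : nat)%:R :> R.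
  rewrite mulr_sumr -big_split /=; apply: eq_bigr => i _.
  by rewrite -addnn -addn1 natrM !natrD; ring.
have -> : \sum_(i < l) (i * i.+1)%:R = \sum_(i < l) (i : nat)%:R ^+ 2 + \sum_(i < l) (i : nat)%:R :> R.
  rewrite -big_split /=; apply: eq_bigr => i _.
  by rewrite -addn1 natrM natrD; ring.
ring.
Qed.


Definition ffp (i : nat) : {poly R} := \prod_(0 <= k < i) ('X - k%:R%:P).

Lemma ffp_ms i : ffp i \is monic /\ size (ffp i) = i.+1.
Proof.
elim: i => [|i [hm hs]]; first by rewrite /ffp big_geq // monic1 size_poly1.
rewrite /ffp big_nat_recr //= -/(ffp i); split; first by rewrite monicMl // monicXsubC.
by rewrite size_Mmonic ?monicXsubC ?size_XsubC ?hs ?monic_neq0 // addnC.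
Qed.

Lemma ffactR n i : (n ^_ i)%:R = \prod_(0 <= k < i) (n%:R - k%:R) :> R.
Proof.
elim: i => [|i IH]; first by rewrite big_geq.
rewrite big_nat_recr //= -IH ffactnSr natrM.
case: (leqP i n) => h; first by rewrite natrB.
by rewrite ffact_small // !mul0r.
Qed.

Lemma detF_vdm : \det F = \prod_(i < l) \prod_(j < l | (i < j)%N) ((m j)%:R - (m i)%:R).
Proof.
pose Cm : 'M[R]_l := \matrix_(i < l, r < l) (ffp i)`_r.
pose a : 'rV[R]_l := \row_j (m j)%:R.
have -> : F = Cm *m Vandermonde l a.
  apply/matrixP => i j; rewrite [RHS]mxE [LHS]mxE ffactR.
  transitivity (\sum_(r < l) (ffp i)`_r * (m j)%:R ^+ r); last first.
    by apply: eq_bigr => r _; rewrite /Cm /a !mxE.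
  rewrite -horner_coef_wide; last by case: (ffp_ms i) => _ ->.
  by rewrite /ffp horner_prod; apply: eq_bigr => k _; rewrite hornerXsubC.
rewrite det_mulmx det_Vandermonde det_trig; last first.
  apply/is_trig_mxP => i j hij; rewrite mxE nth_default //.
  by case: (ffp_ms i) => _ ->.
rewrite big1 ?mul1r; last first.
  move=> i _; rewrite mxE; case: (ffp_ms i) => /monicP hm hs.
  by rewrite -hm /lead_coef hs.
by apply: eq_bigr => i _; apply: eq_bigr => j _; rewrite !mxE.
Qed.

End Mat.
Section Aux.
Variable R : fieldType.
Hypothesis hR : [pchar R] =i pred0.

Lemma natf_neq0 n : (0 < n)%N -> n%:R != 0 :> R.
Proof.
move=> n0; apply/negP => /(natf0_pchar n0) [p]; by rewrite hR.
Qed.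

Lemma natf_inj m n : m%:R = n%:R :> R -> m = n.
Proof.
wlog le: m n / (m <= n)%N.
  move=> W E; case: (leqP m n) => h; first exact: W.
  by apply/esym/W => //; apply: ltnW.
move=> E; apply/eqP; rewrite eqn_leq le /=.
have : (n - m)%:R == 0 :> R by rewrite natrB // E subrr.
case: (posnP (n - m)) => [|h]; first by move/eqP; rewrite subn_eq0.
by rewrite (negbTE (natf_neq0 h)).
Qed.

Variable A : nat -> {poly R}.
Hypothesis hA : appell A.
Let z := fun j : nat => (A j).[0].

Lemma derivnA n i : (A n)^`(i) = (n ^_ i)%:R *: A (n - i).
Proof.
elim: i => [|i IH]; first by rewrite derivn0 ffactn0 scale1r subn0.
rewrite derivnS IH derivZ.
case: (ltnP i n) => [lt|le].
  have E : (n - i = (n - i.+1).+1)%N by lia.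
  rewrite E (proj2 hA) scalerA ffactnSr -natrM E.
  by [].
have -> : (n - i = 0)%N by lia.
rewrite (proj1 hA) -polyC1 derivC scaler0 ffact_small ?scale0r //; lia.
Qed.

Lemma coefA n i : (A n)`_i = 'C(n, i)%:R * z (n - i).
Proof.
elim: n i => [|n IH] i.
  rewrite (proj1 hA) coef1 bin0n /z sub0n (proj1 hA) hornerC.
  by case: (i == 0%N); rewrite ?mul1r ?mul0r.
case: i => [|i]; first by rewrite bin0 mul1r subn0 /z horner_coef0.
have h := coef_deriv (A n.+1) i.
rewrite (proj2 hA) coefZ IH -mulr_natr mul1r in h.
apply: (mulIf (natf_neq0 (ltn0Sn i))).
rewrite mulr_natr -h subSS mulrA -natrM mulrAC -natrM; congr (_%:R * _).
by rewrite [RHS]mulnC -mul_bin_diag.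
Qed.


Lemma z0 : z 0 = 1.
Proof. by rewrite /z (proj1 hA) hornerC. Qed.

Lemma size_A a : (size (A a) <= a.+1)%N.
Proof. by apply/leq_sizeP => i hi; rewrite coefA bin_small ?mul0r. Qed.

Definition good (p : {poly R}) (u v : nat) :=
  [/\ p`_0 = 1, p`_1 = u%:R * z 1 &
      p`_2 = v%:R * (z 2 - z 1 ^+ 2) + 'C(u, 2)%:R * z 1 ^+ 2].

Lemma bin2D a b : ('C(a + b, 2) = 'C(a, 2) + a * b + 'C(b, 2))%N.
Proof.
elim: b => [|b IH]; first by rewrite addn0 muln0 addn0 addn0.
rewrite addnS (binS _ 1) bin1 IH (binS _ 1) bin1; lia.
Qed.

Lemma goodM p q u v u' v' : good p u v -> good q u' v' ->
  good (p * q) (u + u') (v + v').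
Proof.
case=> p0 p1 p2 [q0 q1 q2]; split; rewrite coefM.
- by rewrite big_ord_recr big_ord0 /= add0r p0 q0 mulr1.
- rewrite !big_ord_recr big_ord0 /= add0r p0 q0 p1 q1 natrD; ring.
- rewrite !big_ord_recr big_ord0 /= add0r p0 q0 p1 q1 p2 q2 bin2D !natrD natrM.
  ring.
Qed.

Lemma good_rvA a : good (rv a (A a)) a 'C(a, 2).
Proof.
split; rewrite /rv coef_poly /= coefA.
- by rewrite subn0 binn subnn z0 mulr1.
- case: a => [|a] /=; first by rewrite mul0r.
  by rewrite subn1 /= binSn subSnn.
- case: a => [|[|a]] /=; rewrite ?mul0r ?add0r //.
  have := @bin_sub a.+2 2 isT; rewrite subSS subSS subn0 => ->.
  have -> : (a.+2 - a = 2)%N by lia.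
  set c := 'C(_, _)%:R; ring.
Qed.

Lemma good1 : good 1 0 0.
Proof. by split; rewrite coef1 //= ?mul0r ?add0r. Qed.

Lemma good_prod (s : seq nat) :
  good (\prod_(a <- s) rv a (A a)) (sumn s) (sumn (map (fun a => 'C(a, 2)) s)).
Proof.
elim: s => [|a s IH]; first by rewrite big_nil; exact: good1.
by rewrite big_cons /=; apply: goodM => //; apply: good_rvA.
Qed.

Lemma prodA_rv (s : seq nat) :
  (size (\prod_(a <- s) A a)%R <= (sumn s).+1)%N /\
  rv (sumn s) (\prod_(a <- s) A a) = \prod_(a <- s) rv a (A a).
Proof.
elim: s => [|a s [IH1 IH2]].
  rewrite !big_nil size_poly1; split => //.
  by apply/polyP => -[|k]; rewrite /rv coef_poly //= coef1.
rewrite !big_cons /=; split; first exact: size_mul_le (size_A a) IH1.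
by rewrite rvM ?IH2 // size_A.
Qed.

Lemma coef_prodA (s : seq nat) k : (k <= sumn s)%N ->
  (\prod_(a <- s) A a)`_(sumn s - k) = (\prod_(a <- s) rv a (A a))`_k.
Proof.
move=> hk; case: (prodA_rv s) => _ <-.
by rewrite /rv coef_poly ltnS hk.
Qed.


Lemma coef_W l (m : 'I_l -> nat) k :
  (\sum_(i < l) (i : nat) <= \sum_j m j)%N ->
  (k <= \sum_j m j - \sum_(i < l) (i : nat))%N ->
  (\det (\matrix_(i < l, j < l) (A (m j))^`(i)))`_(\sum_j m j - \sum_(i < l) (i : nat) - k) =
  \sum_(s : 'S_l) (-1) ^+ s * (\prod_i (m (s i) ^_ i)%:R) *
      (\prod_i rv (m (s i) - i) (A (m (s i) - i)))`_k.
Proof.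
move=> hB hk; rewrite /determinant coef_sum; apply: eq_bigr => s _.
under eq_bigr do rewrite mxE derivnA.
rewrite scaler_prod.
have E : forall c (p : {poly R}) j, ((-1) ^+ s * (c *: p))`_j = (-1) ^+ s * c * p`_j.
  by move=> c p j; case: (odd_perm s); rewrite ?expr0 ?expr1 ?mul1r ?mulN1r ?coefN coefZ ?mulNr.
rewrite E; case: (boolP [forall i : 'I_l, (i <= m (s i))%N]) => [/forallP hs|].
  congr (_ * _).
  have Hsum : (\sum_i (m (s i) - i) = \sum_j m j - \sum_(i < l) (i : nat))%N.
    apply/eqP; rewrite -(eqn_add2r (\sum_(i < l) (i : nat))) subnK //.
    rewrite -big_split /=; under eq_bigr do rewrite subnK //.
    by rewrite [X in _ == X](reindex_inj (@perm_inj _ s)).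
  rewrite -Hsum.
  rewrite -(big_map (fun i => m (s i) - i)%N xpredT A).
  rewrite -(big_map (fun i => m (s i) - i)%N xpredT (fun a => rv a (A a))).
  have -> : (\sum_i (m (s i) - i) = sumn [seq (m (s i) - i)%N | i <- index_enum 'I_l])%N.
    by rewrite sumnE big_map.
  apply: coef_prodA.
  by rewrite sumnE big_map Hsum.
rewrite negb_forall => /existsP [i]; rewrite -ltnNge => hi.
by rewrite (bigD1 i) //= ffact_small // !mul0r mulr0 !mul0r.
Qed.


Lemma good_ord l (a : 'I_l -> nat) :
  good (\prod_i rv (a i) (A (a i))) (\sum_i a i) (\sum_i 'C(a i, 2)).
Proof.
have := good_prod [seq a i | i <- index_enum 'I_l].
by rewrite big_map sumnE big_map -map_comp sumnE big_map.
Qed.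

Lemma sum_as l (m : 'I_l -> nat) (s : 'S_l) :
  (forall i : 'I_l, (i <= m (s i))%N) ->
  (\sum_i (m (s i) - i) = \sum_j m j - \sum_(i < l) (i : nat))%N.
Proof.
move=> hs; apply/eqP; rewrite -(eqn_add2r (\sum_(i < l) (i : nat))) subnK //.
  rewrite -big_split /=; under eq_bigr do rewrite subnK //.
  by rewrite [X in _ == X](reindex_inj (@perm_inj _ s)).
rewrite [X in (_ <= X)%N](reindex_inj (@perm_inj _ s)).
by apply: leq_sum => i _; apply: hs.
Qed.

Lemma coef_Wk l (m : 'I_l -> nat) k (G : 'S_l -> R) :
  (\sum_(i < l) (i : nat) <= \sum_j m j)%N ->
  (k <= \sum_j m j - \sum_(i < l) (i : nat))%N ->
  (forall s : 'S_l, (forall i : 'I_l, (i <= m (s i))%N) ->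
     (\prod_i rv (m (s i) - i) (A (m (s i) - i)))`_k = G s) ->
  (\det (\matrix_(i < l, j < l) (A (m j))^`(i)))`_(\sum_j m j - \sum_(i < l) (i : nat) - k) =
  \sum_(s : 'S_l) (-1) ^+ s * (\prod_i (m (s i) ^_ i)%:R) * G s.
Proof.
move=> hB hk hG; rewrite coef_W //; apply: eq_bigr => s _.
case: (boolP [forall i : 'I_l, (i <= m (s i))%N]) => [/forallP hs|].
  by rewrite hG.
rewrite negb_forall => /existsP [i]; rewrite -ltnNge => hi.
by rewrite (bigD1 i) //= ffact_small // !mul0r mulr0 !mul0r.
Qed.

End Aux.

Lemma K_content (R : fieldType) (la : seq nat) :
  let L := size la in
  \sum_(0 <= j < L) ((nth 0%N la j + L - j.+1)%N%:R : R) ^+ 2 - \sum_(0 <= i < L) (i%:R : R) ^+ 2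
  - (L.*2 - 1)%:R * (\sum_(0 <= j < L) ((nth 0%N la j + L - j.+1)%N%:R : R)
                     - \sum_(0 <= i < L) (i%:R : R))
  = 2%:R * (content la)%:~R.
Proof.
move=> L.
pose x j : R := (nth 0%N la j)%:R.
pose d j : R := (L - j.+1)%N%:R.
have hc : 2%:R * (content la)%:~R =
    \sum_(0 <= j < L) (x j ^+ 2 - x j - 2%:R * (j%:R * x j)) :> R.
  rewrite /content rmorph_sum mulr_sumr big_mkord; apply: eq_bigr => i _.
  rewrite rmorph_sum; under eq_bigr do rewrite rmorphB /= -!pmulrn.
  rewrite sumrB sumr_const card_ord -natr_sum.
  rewrite -(big_mkord xpredT (fun j => j)) bin2_sum mulrBr bin2R -mulr_natr /x.
  ring.
have hd : forall j, (j < L)%N -> ((nth 0%N la j + L - j.+1)%N%:R : R) = x j + d j.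
  by move=> j hj; rewrite /x /d -addnBA // natrD.
have E1 : \sum_(0 <= j < L) d j = \sum_(0 <= i < L) (i%:R : R).
  rewrite big_nat_rev; apply: eq_big_nat => i hi; rewrite /d; congr (_%:R); lia.
have E2 : \sum_(0 <= j < L) d j ^+ 2 = \sum_(0 <= i < L) (i%:R : R) ^+ 2.
  rewrite big_nat_rev; apply: eq_big_nat => i hi; rewrite /d; congr (_%:R ^+ 2); lia.
have S1 : \sum_(0 <= j < L) ((nth 0%N la j + L - j.+1)%N%:R : R) ^+ 2 =
    \sum_(0 <= j < L) x j ^+ 2 + 2%:R * \sum_(0 <= j < L) (x j * d j) + \sum_(0 <= j < L) d j ^+ 2.
  rewrite mulr_sumr -!big_split /=; apply: eq_big_nat => j hj.
  rewrite hd; last by case/andP: hj.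
  ring.
have S2 : \sum_(0 <= j < L) ((nth 0%N la j + L - j.+1)%N%:R : R) =
    \sum_(0 <= j < L) x j + \sum_(0 <= j < L) d j.
  rewrite -big_split /=; apply: eq_big_nat => j hj.
  by rewrite hd //; case/andP: hj.
have hZ : 2%:R * \sum_(0 <= j < L) (x j * d j) =
   (L.*2 - 1)%:R * \sum_(0 <= j < L) x j - 2%:R * \sum_(0 <= j < L) (j%:R * x j)
   - \sum_(0 <= j < L) x j.
  rewrite !mulr_sumr -!sumrB; apply: eq_big_nat => j /andP [_ hj].
  rewrite /d natrB // -addnn natrB; last by lia.
  rewrite natrD; ring.
rewrite hc S1 S2 E1 E2 hZ.
rewrite !sumrB -!mulr_sumr.
ring.
Qed.

Theorem propositionA2 (R : fieldType) (hR : [pchar R] =i pred0)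
    (A : nat -> {poly R}) (hA : appell A) (la : seq nat)
    (hla : is_partition la) :
  let n := sumn la in
  let z := fun j : nat => (A j).[0] in
  (appell_wr A la)`_n = 1 /\
  ((1 <= n)%N -> (appell_wr A la)`_(n - 1) = n%:R * z 1%N) /\
  ((2 <= n)%N -> (appell_wr A la)`_(n - 2) =
     (content la)%:~R * (z 2%N - z 1%N ^+ 2) + 'C(n, 2)%:R * z 1%N ^+ 2).
Proof.
move=> n z.
case/andP: hla => hsorted _.
set ns := degvec la.
have hsz : size ns = size la by rewrite /ns /degvec size_map size_iota.
have hmm : forall j, (j < size la)%N -> nth 0%N ns j = (nth 0%N la j + size la - j.+1)%N.
  by move=> j hj; rewrite /ns /degvec (nth_map 0%N) ?size_iota // nth_iota.
pose l := size ns.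
pose m := fun j : 'I_l => nth 0%N ns j.
have hW : wronskian (map A ns) = \det (\matrix_(i < l, j < l) (A (m j))^`(i)).
  rewrite /wronskian size_map; congr (\det _); apply/matrixP => i j.
  by rewrite !mxE (nth_map 0%N).
have hP : \prod_(i < size ns) \prod_(j < size ns | (i < j)%N)
    ((nth 0%N ns j)%:R - (nth 0%N ns i)%:R) = \det (F R m) :> R.
  by rewrite detF_vdm.
have happ : appell_wr A la =
    (\det (F R m))^-1 *: \det (\matrix_(i < l, j < l) (A (m j))^`(i)).
  by rewrite /appell_wr -/ns hP hW.
have hl : l = size la by [].
have hsum : (\sum_j m j = n + \sum_(i < l) (i : nat))%N.
  transitivity (\sum_(j < l) (nth 0%N la j + (size la - j.+1)))%N.
    apply: eq_bigr => j _; rewrite /m hmm; last by rewrite -hsz.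
    by rewrite addnBA // -hsz.
  rewrite big_split /=; congr (_ + _)%N.
    rewrite -(big_mkord xpredT (fun j => nth 0%N la j)) /l hsz.
    by rewrite /n sumnE [RHS](big_nth 0%N).
  rewrite (reindex_inj rev_ord_inj) /=; apply: eq_bigr => j _.
  by have := ltn_ord j; move: (j : nat) => jj; rewrite hl; lia.
have hB : (\sum_(i < l) (i : nat) <= \sum_j m j)%N by rewrite hsum leq_addl.
have hN : (\sum_j m j - \sum_(i < l) (i : nat) = n)%N by rewrite hsum addnK.
have hdet : \det (F R m) != 0.
  rewrite -hP; apply/prodf_neq0 => i _; apply/prodf_neq0 => j hij.
  rewrite subr_eq0; apply/eqP => /(natf_inj hR).
  have hj : (j < size la)%N by rewrite -hsz.
  have hi : (i < size la)%N by rewrite -hsz.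
  rewrite !hmm //.
  have := sorted_leq_nth (fun y x z (h1 : (y <= x)%N) (h2 : (z <= y)%N) => leq_trans h2 h1)
    (fun a => leqnn a) 0%N hsorted i j hi hj (ltnW hij).
  rewrite /=; lia.
have hdetE : \sum_(s : 'S_l) (-1) ^+ s * (\prod_i (m (s i) ^_ i)%:R) = \det (F R m) :> R.
  by apply: eq_bigr => s _; congr (_ * _); apply: eq_bigr => i _; rewrite mxE.
rewrite happ; split.
  rewrite coefZ.
  have := @coef_Wk R hR A hA l m 0 (fun _ => 1) hB (leq0n _).
  rewrite hN subn0 => ->; last first.
    by move=> s hs; case: (good_ord hR hA (fun i => m (s i) - i)%N).
  under eq_bigr do rewrite mulr1.
  by rewrite hdetE mulVf.
split.
  move=> h1; rewrite coefZ.
  have := @coef_Wk R hR A hA l m 1 (fun _ => n%:R * z 1%N) hB.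
  rewrite hN => ->; last first.
    move=> s hs; case: (good_ord hR hA (fun i => m (s i) - i)%N) => _ -> _.
    by rewrite sum_as // hN.
    by [].
  by rewrite -mulr_suml hdetE mulKf.
move=> h2; rewrite coefZ.
have := @coef_Wk R hR A hA l m 2
  (fun s => (\sum_i 'C(m (s i) - i, 2))%:R * (z 2%N - z 1%N ^+ 2) + 'C(n, 2)%:R * z 1%N ^+ 2) hB.
rewrite hN => ->; last first.
  move=> s hs; case: (good_ord hR hA (fun i => m (s i) - i)%N) => _ _ ->.
  by rewrite sum_as // hN.
  by [].
have c1 : forall f : nat -> R, \sum_(j < l) f j = \sum_(0 <= j < size la) f j.
  by move=> f; rewrite -(big_mkord xpredT f) hl.
have hK : \sum_j (m j)%:R ^+ 2 - \sum_(i < l) (i : nat)%:R ^+ 2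
    - (l.*2 - 1)%:R * (\sum_j (m j)%:R - \sum_(i < l) (i : nat)%:R)
    = 2%:R * (content la)%:~R :> R.
  rewrite -(K_content R la) /= /m !c1 hl.
  congr (_ - _ - _ * (_ - _)).
  - rewrite -(big_mkord xpredT (fun j => (nth 0%N ns j)%:R ^+ 2 : R)).
    by apply: eq_big_nat => j /andP [_ hj]; rewrite hmm.
  - by rewrite -(big_mkord xpredT (fun j => (j%:R : R) ^+ 2)).
  - rewrite -(big_mkord xpredT (fun j => (nth 0%N ns j)%:R : R)).
    by apply: eq_big_nat => j /andP [_ hj]; rewrite hmm.
have hT : \sum_(s : 'S_l) (-1) ^+ s * (\prod_i (m (s i) ^_ i)%:R) *
     (\sum_i 'C(m (s i) - i, 2)%:R) = \det (F R m) * (content la)%:~R.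
  apply: (mulfI (natf_neq0 hR (isT : (0 < 2)%N))).
  have := content_sum R m; rewrite hK mulrCA => <-.
  congr (_ * _); apply: eq_bigr => s _; congr (_ * _ * _).
  by apply: eq_bigr => i _; rewrite mxE.
under eq_bigr do rewrite mulrDr natr_sum mulrA [X in _ + X]mulrA.
rewrite big_split /= -!mulr_suml hT hdetE.
by field.
Qed.
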